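(* Let $\mathbf{x}$ be a parking function of length $n$. Then the mixed graph $P(\mathbf{x})$ produced by Algorithm A is a parking graph on $[n]$, and for each vertex $i$ the number of directed edges (up or down) of $P(\mathbf{x})$ pointing into $i$ equals $x_i-1$.
   Context: A parking function of length $n$ is a sequence of positive integers which, sorted increasingly as $x_{(1)}\le\dots\le x_{(n)}$, satisfies $x_{(k)}\le k$ for all $k$. A parking graph $P$ on $[n]$ is a mixed graph with vertex set $[n]$ in which every pair $\{j,k\}$ with $1\le j<k\le n$ is joined by exactly one edge: a down edge $j\leftarrow k$ (directed from $k$ to $j$), an up edge $j\rightarrow k$ (directed from $j$ to $k$), or a downish (undirected) edge $jk$; letting $\vec P$ be obtained by replacing each downish $jk$ ($j<k$) with $j\leftarrow k$, $P$ must satisfy: (i) $\vec P$ is acyclic, and (ii) for every triangle of $P$ having at least one down edge and at least one downish edge, the source (in-degree $0$ within the triangle in $\vec P$) and sink (out-degree $0$ within the triangle in $\vec P$) are not joined by a downish edge. Algorithm A: Input $\mathbf{x}$; start with vertex set $[n]$ and no edges; set $\mathbf{y}:=\mathbf{x}-(1,\dots,1)$. Repeat: (Up step) If some $y_k=0$: let $j:=\max\{k: y_k=0\}$; for every $k>j$ with $y_k>0$, introduce the up edge $j\rightarrow k$ and replace $y_k$ by $y_k-1$; replace every entry that was negative at the start of this step by that entry minus $1$; set $y_j:=-1$; repeat. (Down step) Else, if some $y_k>0$: among all indices $j$ such that there is $k<j$ with $y_k>0$ and the edge $k\leftarrow j$ not yet introduced, choose $j$ with minimal $y_j$; for every $k<j$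 with $y_k>0$, introduce the down edge $k\leftarrow j$ and replace $y_k$ by $y_k-1$; repeat. (Stop) Else (all $y_k<0$): join every pair not yet joined by a downish edge and stop. Output: the mixed graph $P(\mathbf{x})$. *)

(* Defs.v *)
From HB Require Import structures.
From mathcomp Require Import all_boot all_order all_algebra.
Set Implicit Arguments. Unset Strict Implicit. Unset Printing Implicit Defensive.
Import Order.TTheory GRing.Theory Num.Theory.

(* Vertices are the natural numbers 1..n (the set [n]); a sequence
   x = (x_1,...,x_n) is a  seq nat  of size n with  x_i = nth 0 x i.-1. *)

Definition xi (x : seq nat) (i : nat) : nat := nth 0 x i.-1.

Definition parking_function (x : seq nat) : Prop :=
  let s := sort leq x in
  all (fun v => 0 < v) x /\ forall k, k < size s -> nth 0 s k <= k.+1.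

Inductive ekind := EDown | EUp | EDownish.

Definition ekind_eqb (a b : ekind) : bool :=
  match a, b with
  | EDown, EDown | EUp, EUp | EDownish, EDownish => true
  | _, _ => false
  end.

Lemma ekind_eqP : Equality.axiom ekind_eqb.
Proof. by case; case; constructor. Qed.

HB.instance Definition _ := hasDecEq.Build ekind ekind_eqP.

(* An edge (c, j, k) always has j < k and joins j and k:
     (EDown, j, k)    is the down edge     j <- k  (directed from k to j),
     (EUp, j, k)      is the up edge       j -> k  (directed from j to k),
     (EDownish, j, k) is the downish (undirected) edge jk. *)
Definition edge := (ekind * nat * nat)%type.
Definition mgraph := seq edge.

Definition njoin (P : mgraph) (j k : nat) : nat :=
  count (fun e : edge => (e.1.2 == j) && (e.2 == k)) P.

Definition has_kind (P : mgraph) (c : ekind) (u v : nat) : bool :=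
  (c, minn u v, maxn u v) \in P.

(* arc u -> v of vec P (downish jk, j<k, replaced by j <- k) *)
Definition arc (P : mgraph) : rel nat := fun u v =>
  [|| (EUp, u, v) \in P, (EDown, v, u) \in P | (EDownish, v, u) \in P].

Definition parking_graph (n : nat) (P : mgraph) : Prop :=
  (forall e, e \in P -> 1 <= e.1.2 /\ e.1.2 < e.2 /\ e.2 <= n) /\
  (forall j k, 1 <= j -> j < k -> k <= n -> njoin P j k = 1) /\
  (forall (u : nat) (p : seq nat), path (arc P) u p -> last u p = u -> p = [::]) /\
  (forall a b c, arc P a b -> arc P b c -> arc P a c ->
     [|| has_kind P EDown a b, has_kind P EDown b c | has_kind P EDown a c] ->
     [|| has_kind P EDownish a b, has_kind P EDownish b c | has_kind P EDownish a c] ->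
     ~~ has_kind P EDownish a c).

(* The state is (y, E) where y : nat -> int (only the values at 1..n matter)
   and E is the list of edges introduced so far.  Since the down step may
   involve a choice (ties for the minimal y_j), the algorithm is modelled as
   a relation  algA_run n y E P : "from state (y,E), Algorithm A can stop with
   output P". *)

Local Open Scope ring_scope.

Definition in_n (n i : nat) : bool := (1 <= i)%N && (i <= n)%N.

Definition up_y (n : nat) (y : nat -> int) (j : nat) : nat -> int := fun k =>
  if k == j then -1
  else if ((j < k)%N && (0 < y k)) then y k - 1
  else if y k < 0 then y k - 1
  else y k.

Definition up_edges (n : nat) (y : nat -> int) (j : nat) : mgraph :=
  [seq (EUp, j, k) | k <- iota j.+1 (n - j) & 0 < y k].

Definition down_cand (y : nat -> int) (E : mgraph) (n j : nat) : bool :=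
  in_n n j && has (fun k => (0 < y k) && ((EDown, k, j) \notin E)) (iota 1 j.-1).

Definition down_y (y : nat -> int) (j : nat) : nat -> int := fun k =>
  if ((1 <= k)%N && (k < j)%N && (0 < y k)) then y k - 1 else y k.

Definition down_edges (y : nat -> int) (j : nat) : mgraph :=
  [seq (EDown, k, j) | k <- iota 1 j.-1 & 0 < y k].

Definition stop_edges (n : nat) (E : mgraph) : mgraph :=
  [seq (EDownish, p.1, p.2) |
     p <- [seq (j, k) | j <- iota 1 n, k <- iota 1 n] & (p.1 < p.2)%N && (njoin E p.1 p.2 == 0)%N].

Inductive algA_run (n : nat) : (nat -> int) -> mgraph -> mgraph -> Prop :=
  | A_up y E j P :
      in_n n j -> y j = 0 ->
      (forall k, in_n n k -> y k = 0 -> (k <= j)%N) ->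
      algA_run n (up_y n y j) (E ++ up_edges n y j) P ->
      algA_run n y E P
  | A_down y E j P :
      (forall k, in_n n k -> y k != 0) ->
      (exists2 k, in_n n k & 0 < y k) ->
      down_cand y E n j ->
      (forall j', down_cand y E n j' -> y j <= y j') ->
      algA_run n (down_y y j) (E ++ down_edges y j) P ->
      algA_run n y E P
  | A_stop y E :
      (forall k, in_n n k -> y k < 0) ->
      algA_run n y E (E ++ stop_edges n E).

Definition algA (x : seq nat) (P : mgraph) : Prop :=
  algA_run (size x) (fun i => (xi x i)%:Z - 1) [::] P.

Definition indeg (P : mgraph) (i : nat) : nat :=
  count (fun e : edge => ((e.1.1 == EDown) && (e.1.2 == i)) || ((e.1.1 == EUp) && (e.2 == i))) P.

(* Main.v *)
Set Warnings "-notation-overridden,-ambiguous-paths,-notation-incompatible-prefix".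
Require Import Defs.
From HB Require Import structures.
From mathcomp Require Import all_boot all_order all_algebra.
From mathcomp Require Import zify.
Import Order.TTheory GRing.Theory Num.Theory.
Set Implicit Arguments. Unset Strict Implicit.
Local Open Scope ring_scope.

Lemma count_uniq_pred1 (T : eqType) (s : seq T) i (p : pred T) :
  uniq s -> count (fun k => (k == i) && p k) s = ((i \in s) && p i).
Proof.
elim: s => //= a s IH /andP[ani us]; rewrite IH // in_cons.
case: (eqVneq a i) => [<-|ne] /=.
  by rewrite (negbTE ani) /= addn0.
by [].
Qed.

Lemma mem_up n y j c a b : ((c,a,b) \in up_edges n y j) =
  [&& c == EUp, a == j, (j < b)%N, (b <= n)%N & 0 < y b].
Proof.
apply/mapP/and5P.
  case=> k; rewrite mem_filter mem_iota => /andP[yk /andP[h1 h2]] [-> -> ->].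
  split => //; lia.
case=> /eqP-> /eqP-> h1 h2 h3; exists b => //; rewrite mem_filter mem_iota h3 /=; lia.
Qed.

Lemma mem_down y j c a b : ((c,a,b) \in down_edges y j) =
  [&& c == EDown, b == j, (1 <= a)%N, (a < j)%N & 0 < y a].
Proof.
apply/mapP/and5P.
  case=> k; rewrite mem_filter mem_iota => /andP[yk /andP[h1 h2]] [-> -> ->].
  split => //; lia.
case=> /eqP-> /eqP-> h1 h2 h3; exists a => //; rewrite mem_filter mem_iota h3 /=; lia.
Qed.

Lemma mem_stop n E c a b : ((c,a,b) \in stop_edges n E) =
  [&& c == EDownish, (1 <= a)%N, (a < b)%N, (b <= n)%N & njoin E a b == 0%N].
Proof.
apply/mapP/and5P.
  case=> p; rewrite mem_filter => /andP[H /allpairsP[[u v] [/= hu hv Hp]]]; subst p.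
  case=> -> -> ->; move: H hu hv; rewrite !mem_iota /= => /andP[h1 h2] hu hv; split => //; lia.
case=> /eqP-> h1 h2 h3 h4; exists (a,b) => //; rewrite mem_filter /= h2 h4 /=.
apply/allpairsP; exists (a,b); rewrite !mem_iota /=; split => //; lia.
Qed.

Lemma up_uniq n y j : uniq (up_edges n y j).
Proof.
rewrite map_inj_uniq ?filter_uniq ?iota_uniq //.
by move=> u v [].
Qed.

Lemma down_uniq y j : uniq (down_edges y j).
Proof.
rewrite map_inj_uniq ?filter_uniq ?iota_uniq //.
by move=> u v [].
Qed.

Lemma indeg_cat E1 E2 i : indeg (E1 ++ E2) i = (indeg E1 i + indeg E2 i)%N.
Proof. by rewrite /indeg count_cat. Qed.

Lemma njoin_cat E1 E2 a b : njoin (E1 ++ E2) a b = (njoin E1 a b + njoin E2 a b)%N.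
Proof. by rewrite /njoin count_cat. Qed.

Lemma indeg_up n y j i : indeg (up_edges n y j) i = [&& (j < i)%N, (i <= n)%N & 0 < y i].
Proof.
rewrite /indeg /up_edges count_map count_filter.
rewrite (@eq_count _ _ (fun k => (k == i) && (0 < y k))); last first.
  by move=> k /=; rewrite /predI /preim /=; case: (k == i).
rewrite count_uniq_pred1 ?iota_uniq // mem_iota.
have -> : (j.+1 <= i < j.+1 + (n - j))%N = (j < i <= n)%N.
  by apply/idP/idP => /andP[? ?]; apply/andP; split; lia.
by case: (j < i)%N; case: (i <= n)%N.
Qed.

Lemma indeg_down y j i : indeg (down_edges y j) i = [&& (1 <= i)%N, (i < j)%N & 0 < y i].
Proof.
rewrite /indeg /down_edges count_map count_filter.
rewrite (@eq_count _ _ (fun k => (k == i) && (0 < y k))); last first.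
  by move=> k /=; rewrite /predI /preim /=; case: (k == i).
rewrite count_uniq_pred1 ?iota_uniq // mem_iota.
have -> : (1 <= i < 1 + j.-1)%N = (1 <= i < j)%N.
  by apply/idP/idP => /andP[? ?]; apply/andP; split; lia.
by case: (1 <= i)%N; case: (i < j)%N.
Qed.

Lemma indeg_stop n E i : indeg (stop_edges n E) i = 0%N.
Proof.
rewrite /indeg /stop_edges count_map count_filter; apply/eqP; rewrite -leqn0 leqNgt -has_count.
by apply/hasPn => p _ /=.
Qed.

Lemma njoin_stop n E a b : (1 <= a)%N -> (a < b)%N -> (b <= n)%N ->
  njoin (stop_edges n E) a b = (njoin E a b == 0%N).
Proof.
move=> h1 h2 h3.
rewrite /njoin /stop_edges count_map count_filter.
rewrite (@eq_count _ _ (fun p => (p == (a,b)) && ((p.1 < p.2)%N && (njoin E p.1 p.2 == 0%N)))); last first.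
  move=> [u v] /=; rewrite /predI /preim /= xpair_eqE.
  by case: (u == a); case: (v == b).
rewrite count_uniq_pred1 /=.
  rewrite h2 /=; have -> : (a, b) \in [seq (j, k) | j <- iota 1 n, k <- iota 1 n].
    by apply/allpairsP; exists (a,b); rewrite !mem_iota /=; split => //; lia.
  by [].
apply: allpairs_uniq; rewrite ?iota_uniq //.
by move=> [u v] [u' v'] _ _ /=.
Qed.

Lemma count_le1 (T : eqType) (s : seq T) (p : pred T) :
  uniq s -> (forall u v, u \in s -> v \in s -> p u -> p v -> u = v) -> (count p s <= 1)%N.
Proof.
elim: s => //= e s IH /andP[es us] H.
case pe: (p e) => /=.
  rewrite -[X in (_ <= X)%N]addn0 leq_add2l leqn0 -[_ == _]negbK -lt0n -has_count.
  apply/negP => /hasP[v vs pv]; move: es; rewrite (H e v) ?in_cons ?eqxx ?vs ?orbT //.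
by apply: IH => // u v us' vs'; apply: H; rewrite in_cons ?us' ?vs' orbT.
Qed.

Definition bef (y : nat -> int) (c b : nat) : bool := (y c < 0) && (y c < y b).

Lemma upy_j n y j : up_y n y j j = -1.
Proof. by rewrite /up_y eqxx. Qed.

Lemma upy_neg n y j k : k != j -> y k < 0 -> up_y n y j k = y k - 1.
Proof.
move=> kj yk; rewrite /up_y (negbTE kj) yk.
case: ifP => // /andP[_ h]; lia.
Qed.

Lemma upy_nn n y j k : k != j -> 0 <= y k ->
  up_y n y j k = if (j < k)%N && (0 < y k) then y k - 1 else y k.
Proof.
move=> kj yk; rewrite /up_y (negbTE kj).
case: ifP => // _; have -> : (y k < 0) = false by lia.
by [].
Qed.

Lemma bef_up1 n y j c b : y j = 0 -> bef y c b -> bef (up_y n y j) c b.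
Proof.
rewrite /bef => yj /andP[h1 h2].
have cj : c != j by apply/eqP => cj; subst; lia.
rewrite upy_neg //.
case: (eqVneq b j) => [->|bj]; first by rewrite upy_j; apply/andP; split; lia.
case: (ltP (y b) 0) => hb; first by rewrite upy_neg //; apply/andP; split; lia.
rewrite upy_nn //; case: ifP => _; apply/andP; split; lia.
Qed.

Lemma bef_up2 n y j c b : y j = 0 -> c != j -> bef (up_y n y j) c b -> bef y c b.
Proof.
rewrite /bef => yj cj.
case: (ltP (y c) 0) => hc; last first.
  by rewrite upy_nn //; case: ifP => [/andP[_ hp]|_] /andP[h1 h2]; lia.
rewrite upy_neg // => /andP[h1 h2]; apply/andP; split => //.
case: (eqVneq b j) => [bj|bj]; first by subst; lia.
case: (ltP (y b) 0) => hb; first by move: h2; rewrite upy_neg //; lia.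
lia.
Qed.

Lemma bef_up3 n y j b : y j = 0 -> bef (up_y n y j) j b = (b != j) && (0 <= y b).
Proof.
rewrite /bef upy_j => yj /=.
case: (eqVneq b j) => [->|bj] /=; first by rewrite upy_j.
case: (ltP (y b) 0) => hb; first by rewrite upy_neg //; lia.
by rewrite upy_nn //; case: ifP => [/andP[_ hp]|_]; lia.
Qed.

Lemma bef_down y j c b : bef (down_y y j) c b = bef y c b.
Proof.
rewrite /bef /down_y.
case: ifP => [/andP[_ hc]|_]; case: ifP => [/andP[_ hb]|_];
  apply/idP/idP => /andP[h1 h2]; apply/andP; split; lia.
Qed.

Record Inv (n : nat) (x : seq nat) (y : nat -> int) (E : mgraph) : Prop := {
 iE : forall c a b, (c,a,b) \in E -> [/\ (1 <= a)%N, (a < b)%N, (b <= n)%N &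
        ((c == EUp) && bef y a b) || ((c == EDown) && bef y b a)];
 iU : forall j k, in_n n j -> in_n n k -> (j < k)%N -> bef y j k -> (EUp,j,k) \in E;
 iK1 : forall a b c, (EDown,b,a) \in E -> in_n n c -> (c < a)%N -> ~~ bef y c b -> (EDown,c,a) \in E;
 iK2 : forall a b c, (EDown,c,b) \in E -> in_n n a -> bef y a b -> (c < a)%N -> (EDown,c,a) \in E;
 iDist : forall i k, in_n n i -> in_n n k -> i != k -> y i < 0 -> y k < 0 -> y i != y k;
 iUniq : uniq E;
 iI : forall i, in_n n i -> if 0 <= y i then (indeg E i)%:Z + y i = (xi x i)%:Z - 1
                            else (indeg E i)%:Z = (xi x i)%:Z - 1 }.

Lemma upy_neg_iff n y j k : k != j -> (up_y n y j k < 0) = (y k < 0).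
Proof.
move=> kj; case: (ltP (y k) 0) => h; first by rewrite upy_neg //; lia.
by rewrite upy_nn //; case: ifP => [/andP[_ hp]|_]; lia.
Qed.

Lemma inv_up n x y E j : Inv n x y E -> in_n n j -> y j = 0 ->
  (forall k, in_n n k -> y k = 0 -> (k <= j)%N) ->
  Inv n x (up_y n y j) (E ++ up_edges n y j).
Proof.
move=> I jn yj jmax.
have bef_old c b : bef y c b -> y c < 0 by case/andP.
have jn' := jn; move/andP: jn' => [j1 jle].
split.
- move=> c a b; rewrite mem_cat => /orP[eE|].
    case: (iE I eE) => h1 h2 h3 /orP[/andP[-> hb]|/andP[-> hb]].
      by split => //; rewrite (@bef_up1 n y j a b yj hb).
    by split => //; rewrite (@bef_up1 n y j b a yj hb) orbT.
  rewrite mem_up => /and5P[/eqP-> /eqP-> h1 h2 h3]; split => //.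
  rewrite eqxx /= bef_up3 // orbF; apply/andP; split; [apply/eqP => bj; subst; lia| lia].
- move=> j0 k j0n kn jk; case: (eqVneq j0 j) => [e|ne].
    subst j0; rewrite bef_up3 // => /andP[kj yk]; rewrite mem_cat mem_up eqxx /=; apply/orP; right.
    have hk := jk.
    have yk0 : y k <> 0 by move=> yk0; have := jmax k kn yk0; lia.
    rewrite hk /= (andP kn).2 /=; lia.
  by move=> /(bef_up2 yj ne) hb; rewrite mem_cat (iU I) //.
- move=> a b c; rewrite mem_cat mem_up /= orbF => eE cn ca nb.
  rewrite mem_cat (iK1 I eE) //; apply/negP => hb; move/negP: nb; apply.
  exact: bef_up1.
- move=> a b c; rewrite mem_cat mem_up /= orbF => eE an ab ca.
  case: (eqVneq a j) => [aj|ne].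
    subst a; move: ab; rewrite bef_up3 // => /andP[_ hb].
    case: (iE I eE) => _ _ _ /orP[/andP[//]|/andP[_ /andP[hb' _]]]; lia.
  by rewrite mem_cat (iK2 I eE) // (bef_up2 yj ne ab).
- move=> i k iN kN ik.
  case: (eqVneq i j) => [ei|ij]; case: (eqVneq k j) => [ek|kj].
  + by subst; rewrite eqxx in ik.
  + subst i; rewrite upy_j upy_neg_iff // => _ hk; rewrite upy_neg //; lia.
  + subst k; rewrite upy_j upy_neg_iff // => hi _; rewrite upy_neg //; lia.
  + rewrite !upy_neg_iff // => hi hk; rewrite !upy_neg //.
    have := iDist I iN kN ik hi hk; lia.
- rewrite cat_uniq (iUniq I) up_uniq andbT /=; apply/hasPn => -[[c a] b].
  rewrite mem_up => /and5P[/eqP-> /eqP-> _ _ _]; apply/negP => eE.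
  by case: (iE I eE) => _ _ _ /orP[/andP[_ /andP[h _]]|/andP[//]]; lia.
- move=> i iN; have := iI I iN; rewrite indeg_cat indeg_up.
  case: (eqVneq i j) => [->|ij].
    rewrite yj upy_j ltnn /= addn0; lia.
  case: (ltP (y i) 0) => hi.
    rewrite upy_neg //; have -> : (0 <= y i - 1) = false by lia.
    have -> : (0 < y i) = false by lia.
    by rewrite !andbF addn0.
  have -> : (i <= n)%N by case/andP: iN.
  rewrite upy_nn //.
  case H: ((j < i)%N && (0 < y i)).
    move/andP: H => [H1 H2]; rewrite /=.
    have -> : (0 <= y i - 1) by lia.
    lia.
  rewrite /= hi addn0; lia.
Qed.

Lemma downy_neg_iff y j k : (down_y y j k < 0) = (y k < 0).
Proof. rewrite /down_y; case: ifP => [/andP[_ h]|_] //; lia. Qed.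

Lemma downy_neg y j k : y k < 0 -> down_y y j k = y k.
Proof. rewrite /down_y; case: ifP => [/andP[_ h]|_] //; lia. Qed.

Lemma inv_down n x y E j : Inv n x y E -> (forall k, in_n n k -> y k != 0) ->
  down_cand y E n j -> (forall j', down_cand y E n j' -> y j <= y j') -> y j < 0 ->
  Inv n x (down_y y j) (E ++ down_edges y j).
Proof.
move=> I nz cand jmin yj.
have cand' := cand.
move: cand' => /andP[jn /hasP[k0 k0i /andP[yk0 k0E]]].
move: k0i; rewrite mem_iota => k0i.
have jn' := jn; move/andP: jn' => [j1 jle].
have F b : (EDown,b,j) \notin E.
  apply/negP => bE; move/negP: k0E; apply; apply: (iK1 I bE).
  - rewrite /in_n; apply/andP; split; lia.
  - lia.
  - rewrite /bef negb_and; apply/orP; left; lia.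
split.
- move=> c a b; rewrite mem_cat !bef_down => /orP[eE|]; first exact: (iE I eE).
  rewrite mem_down => /and5P[/eqP-> /eqP-> h1 h2 h3]; split => //; try lia.
  by rewrite /= /bef yj /=; lia.
- move=> j0 k j0n kn jk; rewrite bef_down => hb; rewrite mem_cat (iU I) //.
- move=> a b c; rewrite mem_cat bef_down => /orP[eE|eD] cn ca nb.
    by rewrite mem_cat (iK1 I eE).
  move: eD; rewrite mem_down => /and5P[_ /eqP ea h1 h2 h3]; subst a.
  have hc : 0 < y c.
    have := nz c cn; move: nb; rewrite /bef negb_and => /orP[]; lia.
  rewrite mem_cat mem_down eqxx /= hc andbT; apply/orP; right; apply/andP; split => //.
  rewrite ca andbT; by case/andP: cn.
- move=> a b c; rewrite mem_cat bef_down => /orP[eE|eD] an ab ca.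
    by rewrite mem_cat (iK2 I eE).
  move: eD; rewrite mem_down => /and5P[_ /eqP eb h1 h2 h3]; subst b.
  rewrite mem_cat; case: (boolP ((EDown, c, a) \in E)) => // caE.
  have : down_cand y E n a.
    rewrite /down_cand an /=; apply/hasP; exists c; last by rewrite h3.
    rewrite mem_iota; lia.
  move/jmin; move: ab; rewrite /bef => /andP[_ h]; lia.
- move=> i k iN kN ik; rewrite !downy_neg_iff => hi hk; rewrite !downy_neg //.
  exact: (iDist I).
- rewrite cat_uniq (iUniq I) down_uniq andbT /=; apply/hasPn => -[[c a] b].
  by rewrite mem_down => /and5P[/eqP-> /eqP-> _ _ _]; apply: F.
- move=> i iN; have := iI I iN; rewrite indeg_cat indeg_down /down_y.
  case H: [&& (1 <= i)%N, (i < j)%N & 0 < y i].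
    move/and3P: H => [H1 H2 H3]; rewrite H1 H2 H3 /=.
    have -> : (0 <= y i) by lia.
    have -> : (0 <= y i - 1) by lia.
    lia.
  have -> : ((1 <= i)%N && (i < j)%N && (0 < y i)) = false by rewrite -H andbA.
  by rewrite addn0.
Qed.

Lemma count_in_le (T : eqType) (s : seq T) (a b : pred T) :
  (forall v, v \in s -> a v -> b v) -> (count a s <= count b s)%N.
Proof.
elim: s => //= e s IH H.
apply: leq_add; last by apply: IH => v vs; apply: H; rewrite in_cons vs orbT.
case ae: (a e) => //=; by rewrite (H e) // in_cons eqxx.
Qed.

Lemma map_xi x : [seq xi x i | i <- iota 1 (size x)] = x.
Proof.
rewrite -[1%N]addn0 iotaDl -map_comp.
rewrite -[RHS](mkseq_nth 0%N) /mkseq; apply: eq_map => k /=.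
by rewrite /xi add1n.
Qed.

Lemma park_count x m : parking_function x -> (m <= size x)%N ->
  (m <= count (fun i => xi x i <= m)%N (iota 1 (size x)))%N.
Proof.
move=> [_ Hp] hm.
rewrite -(count_map (xi x) (fun v => v <= m)%N) map_xi.
set s := sort leq x.
have ps : perm_eq s x by rewrite perm_sort.
rewrite -(permP ps).
have ss : sorted leq s by apply: sort_sorted; exact: leq_total.
have szs : size s = size x by rewrite size_sort.
rewrite -(cat_take_drop m s) count_cat.
apply: leq_trans (leq_addr _ _).
have szt : size (take m s) = m by rewrite size_take szs; case: ltnP => //; lia.
have -> : count (fun v => (v <= m)%N) (take m s) = size (take m s).
  apply/eqP; rewrite -all_count; apply/(all_nthP 0%N) => k.
  rewrite szt => hk; rewrite nth_take //.
  have km : (k <= m.-1)%N by lia.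
  have := sorted_leq_nth leq_trans leqnn 0%N ss; move/(_ k m.-1).
  rewrite !inE szs => /(_ ltac:(lia) ltac:(lia) km) h.
  apply: leq_trans h _.
  have := Hp m.-1; rewrite szs => /(_ ltac:(lia)). move=> h2; apply: leq_trans h2 _; lia.
by rewrite szt.
Qed.

Lemma progress n x y E : parking_function x -> size x = n -> Inv n x y E ->
  (forall k, in_n n k -> y k != 0) -> (exists2 k, in_n n k & 0 < y k) ->
  exists2 j, down_cand y E n j & y j < 0.
Proof.
move=> px sx I nz [k0 k0n yk0].
case: (boolP (has (fun j => down_cand y E n j && (y j < 0)) (iota 1 n))) =>
  [/hasP[j _ /andP[h1 h2]]|H]; first by exists j.
exfalso.
have Hall j k : in_n n j -> y j < 0 -> (1 <= k)%N -> (k < j)%N -> 0 < y k -> (EDown,k,j) \in E.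
  move=> jn yj k1 kj yk.
  move/hasPn: H => /(_ j); rewrite mem_iota.
  have -> : (1 <= j < 1 + n)%N by (case/andP: jn => ? ?; apply/andP; split; lia).
  move=> /(_ isT); rewrite yj andbT /down_cand jn /= => /hasPn /(_ k).
  rewrite mem_iota => /(_ ltac:(apply/andP; split; lia)); rewrite yk /= negbK.
  done.
set d := count (fun j => y j < 0) (iota 1 n).
have Hact k : in_n n k -> 0 < y k -> (d <= indeg E k)%N.
  move=> kn yk.
  set s := [seq (if (j < k)%N then (EUp,j,k) else (EDown,k,j)) | j <- filter (fun j => y j < 0) (iota 1 n)].
  have -> : d = size s by rewrite size_map size_filter.
  rewrite /indeg -size_filter; apply: uniq_leq_size.
    rewrite map_inj_in_uniq ?filter_uniq ?iota_uniq //.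
    move=> j1 j2 _ _ /=; case: ifP => _; case: ifP => _; by case.
  move=> e /mapP[j]; rewrite mem_filter mem_iota => /andP[yj jr] ->.
  have jn : in_n n j by rewrite /in_n; apply/andP; split; lia.
  rewrite mem_filter; case: ltnP => jk /=.
    rewrite eqxx /=; apply: (iU I) => //; rewrite /bef yj /=; lia.
  rewrite eqxx /=; apply: Hall => //; first by case/andP: kn.
  rewrite ltn_neqAle jk andbT; apply/eqP => kj; subst; lia.
have Hproc i : in_n n i -> y i < 0 -> (indeg E i <= d)%N.
  move=> iN yi.
  pose src := fun e : edge => if e.1.1 == EUp then e.1.2 else e.2.
  rewrite /indeg -size_filter -(size_map src) /d -size_filter.
  apply: uniq_leq_size.
    rewrite map_inj_in_uniq ?filter_uniq ?(iUniq I) //.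
    move=> [[c1 a1] b1] [[c2 a2] b2]; rewrite !mem_filter /= => /andP[p1 e1] /andP[p2 e2].
    have [_ h1 _ _] := iE I e1; have [_ h2 _ _] := iE I e2.
    rewrite /src /=.
    case/orP: p1 => /andP[/eqP ec1 /eqP ea1]; case/orP: p2 => /andP[/eqP ec2 /eqP ea2];
      subst => /= e; try (by rewrite e); lia.
  move=> v /mapP[[[c a] b]]; rewrite mem_filter /= => /andP[p eE] ->.
  have [h1 h2 h3 hk] := iE I eE.
  rewrite mem_filter mem_iota.
  case/orP: p => /andP[/eqP ec /eqP ea]; subst; rewrite /src /=;
    move: hk => /orP[] /andP[hc /andP[hb _]] //;
    rewrite hb /=; apply/andP; split; case/andP: iN => ? ?; lia.
have dn : (d < n)%N.
  have := count_predC (fun j => y j < 0) (iota 1 n); rewrite size_iota.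
  have : (0 < count (predC (fun j => (y j < 0)%R)) (iota 1 n))%N.
    rewrite -has_count; apply/hasP; exists k0; last by rewrite /= -leNgt ltW.
    rewrite mem_iota; case/andP: k0n => ? ?; apply/andP; split; lia.
  rewrite /d; lia.
have := @park_count x d.+1 px; rewrite sx => /(_ dn).
have : (count (fun i => xi x i <= d.+1)%N (iota 1 n) <= d)%N.
  apply: leq_trans (@count_in_le _ _ _ (fun j => y j < 0) _) _ => //.
  move=> i; rewrite mem_iota => ir hx.
  have iN : in_n n i by rewrite /in_n; apply/andP; split; lia.
  case: (ltP (y i) 0) => // hy.
  have yi : 0 < y i by have := nz i iN; lia.
  have := Hact i iN yi; have := iI I iN; rewrite hy; lia.
lia.
Qed.

Lemma exists_max (s : seq nat) (p : pred nat) : has p s ->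
  exists j, [/\ j \in s, p j & forall k, k \in s -> p k -> (k <= j)%N].
Proof.
elim: s => //= a s IH /orP[pa|hs].
  case: (boolP (has p s)) => [/IH [j [js pj H]]|hn].
    case: (leqP a j) => aj.
      exists j; split => //; first by rewrite in_cons js orbT.
      by move=> k; rewrite in_cons => /orP[/eqP->|]//; apply: H.
    exists a; split => //; first by rewrite in_cons eqxx.
    move=> k; rewrite in_cons => /orP[/eqP->|ks pk] //; have := H k ks pk; lia.
  exists a; split => //; first by rewrite in_cons eqxx.
  move=> k; rewrite in_cons => /orP[/eqP->|ks pk] //.
  by move/hasPn: hn => /(_ k ks); rewrite pk.
have [j [js pj H]] := IH hs.
case: (boolP (p a)) => pa.
  case: (leqP a j) => aj.
    exists j; split => //; first by rewrite in_cons js orbT.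
    by move=> k; rewrite in_cons => /orP[/eqP->|]//; apply: H.
  exists a; split => //; first by rewrite in_cons eqxx.
  move=> k; rewrite in_cons => /orP[/eqP->|ks pk] //; have := H k ks pk; lia.
exists j; split => //; first by rewrite in_cons js orbT.
move=> k; rewrite in_cons => /orP[/eqP->|ks pk]; [by rewrite (negbTE pa)| exact: H].
Qed.

Lemma exists_min (s : seq nat) (f : nat -> int) (p : pred nat) : has p s ->
  exists j, [/\ j \in s, p j & forall k, k \in s -> p k -> f j <= f k].
Proof.
elim: s => //= a s IH H.
case: (boolP (has p s)) => [/IH [j [js pj Hj]]|hn].
  case: (boolP (p a)) => pa.
    case: (lerP (f j) (f a)) => aj.
      exists j; split => //; first by rewrite in_cons js orbT.
      by move=> k; rewrite in_cons => /orP[/eqP->|]//; apply: Hj.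
    exists a; split => //; first by rewrite in_cons eqxx.
    move=> k; rewrite in_cons => /orP[/eqP->|ks pk] //; have := Hj k ks pk; lia.
  exists j; split => //; first by rewrite in_cons js orbT.
  move=> k; rewrite in_cons => /orP[/eqP->|ks pk]; [by rewrite (negbTE pa)| exact: Hj].
have pa : p a by move: H; case/orP => // hs; rewrite hs in hn.
exists a; split => //; first by rewrite in_cons eqxx.
move=> k; rewrite in_cons => /orP[/eqP->|ks pk] //.
by move/hasPn: hn => /(_ k ks); rewrite pk.
Qed.

Lemma sumn_le (s : seq nat) (f g : nat -> nat) : (forall i, i \in s -> (f i <= g i)%N) ->
  (sumn (map f s) <= sumn (map g s))%N.
Proof.
elim: s => //= a s IH H; apply: leq_add; first by apply: H; rewrite in_cons eqxx.
by apply: IH => k ks; apply: H; rewrite in_cons ks orbT.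
Qed.

Lemma sumn_lt (s : seq nat) (f g : nat -> nat) : (forall i, i \in s -> (f i <= g i)%N) ->
  (exists2 i, i \in s & (f i < g i)%N) -> (sumn (map f s) < sumn (map g s))%N.
Proof.
elim: s => [|a s IH] H [i] //=; rewrite in_cons => /orP[/eqP->|iS] hi.
  apply: leq_trans (_ : (g a + sumn [seq f i | i <- s] <= _)%N).
    by rewrite ltn_add2r.
  by rewrite leq_add2l; apply: sumn_le => k ks; apply: H; rewrite in_cons ks orbT.
apply: leq_trans (_ : (f a + sumn [seq g i | i <- s] <= _)%N).
  rewrite ltn_add2l; apply: IH; last by exists i.
  by move=> k ks; apply: H; rewrite in_cons ks orbT.
by rewrite leq_add2r; apply: H; rewrite in_cons eqxx.
Qed.

Definition term (y : nat -> int) (k : nat) : nat := if 0 <= y k then (absz (y k)).+1 else 0%N.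
Definition mu n y := sumn [seq term y k | k <- iota 1 n].

Lemma term_le y y' k : y' k <= y k -> (term y' k <= term y k)%N.
Proof.
rewrite /term => h; case: ifP => h1; case: ifP => h2 //; try lia.
Qed.

Lemma term_lt y y' k : y' k < y k -> 0 <= y k -> (term y' k < term y k)%N.
Proof.
rewrite /term => h h0; rewrite h0; case: ifP => h1 //; lia.
Qed.

Lemma mu_up n y j : in_n n j -> y j = 0 -> (mu n (up_y n y j) < mu n y)%N.
Proof.
move=> jn yj; apply: sumn_lt.
  move=> k _; apply: term_le; case: (eqVneq k j) => [->|kj]; first by rewrite upy_j yj.
  case: (ltP (y k) 0) => h; first by rewrite upy_neg //; lia.
  by rewrite upy_nn //; case: ifP => _; lia.
exists j; first by rewrite mem_iota; case/andP: jn => ? ?; apply/andP; split; lia.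
by apply: term_lt; rewrite ?upy_j yj.
Qed.

Lemma mu_down n y E j : down_cand y E n j -> (mu n (down_y y j) < mu n y)%N.
Proof.
move=> /andP[jn /hasP[k0 k0i /andP[yk0 _]]].
move: k0i; rewrite mem_iota => k0i.
apply: sumn_lt.
  by move=> k _; apply: term_le; rewrite /down_y; case: ifP => _; lia.
exists k0; first by rewrite mem_iota; case/andP: jn => ? ?; apply/andP; split; lia.
apply: term_lt; last lia.
rewrite /down_y; have -> : (1 <= k0)%N && (k0 < j)%N && (0 < y k0) by rewrite yk0 andbT; apply/andP; split; lia.
lia.
Qed.

Lemma exists_run n x : parking_function x -> size x = n ->
  forall m y E, (mu n y < m)%N -> Inv n x y E -> exists P, algA_run n y E P.
Proof.
move=> px sx; elim=> [//|m IH] y E hm I.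
case: (boolP (has (fun k => y k == 0) (iota 1 n))) => [hz|hz].
  have [j [jI /eqP yj jmax]] := exists_max hz.
  have jn : in_n n j by move: jI; rewrite mem_iota => /andP[? ?]; apply/andP; split; lia.
  have jmax' : forall k, in_n n k -> y k = 0 -> (k <= j)%N.
    move=> k /andP[? ?] yk; apply: jmax; last by rewrite yk.
    rewrite mem_iota; apply/andP; split; lia.
  have [P HP] := IH (up_y n y j) (E ++ up_edges n y j)
      (leq_trans (mu_up jn yj) hm) (inv_up I jn yj jmax').
  by exists P; exact: A_up jn yj jmax' HP.
have nz : forall k, in_n n k -> y k != 0.
  move=> k /andP[? ?]; move/hasPn: hz; apply; rewrite mem_iota; apply/andP; split; lia.
case: (boolP (has (fun k => 0 < y k) (iota 1 n))) => [hp|hp].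
  have [k0 k0I yk0] := hasP hp.
  have k0n : in_n n k0 by move: k0I; rewrite mem_iota => /andP[? ?]; apply/andP; split; lia.
  have [j0 c0 yj0] := progress px sx I nz (ex_intro2 _ _ k0 k0n yk0).
  have inI j' : down_cand y E n j' -> j' \in iota 1 n.
    by case/andP => /andP[? ?] _; rewrite mem_iota; apply/andP; split; lia.
  have : has (down_cand y E n) (iota 1 n) by apply/hasP; exists j0 => //; apply: inI.
  move=> /(exists_min y) [j [jI cj jmin]].
  have jmin' : forall j', down_cand y E n j' -> y j <= y j' by move=> j' cj'; apply: jmin => //; apply: inI.
  have yj : y j < 0 by have := jmin' j0 c0; lia.
  have [P HP] := IH (down_y y j) (E ++ down_edges y j)
      (leq_trans (mu_down cj) hm) (inv_down I nz cj jmin' yj).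
  by exists P; apply: A_down nz _ cj jmin' HP; exists k0.
exists (E ++ stop_edges n E); apply: A_stop => k kn.
have := nz k kn; move/hasPn: hp => /(_ k).
case/andP: kn => ? ? ; rewrite mem_iota => /(_ ltac:(apply/andP; split; lia)) /=; lia.
Qed.

Lemma path_lt (y : nat -> int) u p : path (fun a b => y a < y b) u p -> p != [::] -> y u < y (last u p).
Proof.
elim: p u => //= a p IH u /andP[h hp] _.
case: p IH hp => [|b p] IH hp //=.
have := IH a hp isT; rewrite /=; lia.
Qed.

Lemma njoin_pos E c a b : (c,a,b) \in E -> (0 < njoin E a b)%N.
Proof.
move=> h; rewrite /njoin -has_count; apply/hasP; exists (c,a,b) => //=.
by rewrite !eqxx.
Qed.

Lemma final n x y E : parking_function x -> size x = n -> Inv n x y E ->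
  (forall k, in_n n k -> y k < 0) ->
  parking_graph n (E ++ stop_edges n E) /\
  (forall i, in_n n i -> indeg (E ++ stop_edges n E) i = (xi x i - 1)%N).
Proof.
move=> px sx I neg.
set P := E ++ stop_edges n E.
have notE a b : (EDownish, a, b) \notin E.
  apply/negP => h; have [_ _ _ /orP[]/andP[]] := iE I h; done.
have inPU u v : (EUp,u,v) \in P -> (EUp,u,v) \in E.
  by rewrite mem_cat mem_stop /= orbF.
have inPD u v : (EDown,u,v) \in P -> (EDown,u,v) \in E.
  by rewrite mem_cat mem_stop /= orbF.
have inPS u v : (EDownish,u,v) \in P -> (EDownish,u,v) \in stop_edges n E.
  by rewrite mem_cat (negbTE (notE u v)).
have unj a b : (1 <= a)%N -> (a < b)%N -> (b <= n)%N -> njoin E a b = 0%N -> y b < y a.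
  move=> h1 h2 h3 h0.
  have an : in_n n a by apply/andP; split; lia.
  have bn : in_n n b by apply/andP; split; lia.
  have ha := neg a an; have hb := neg b bn.
  have := iDist I an bn ltac:(apply/eqP; lia) ha hb.
  case: (ltrP (y a) (y b)) => h; last by lia.
  have := njoin_pos (iU I an bn h2 ltac:(by rewrite /bef ha h)); lia.
have arcP u v : Defs.arc P u v -> y u < y v.
  case/or3P => [/inPU h|/inPD h|/inPS h].
  - by have [_ _ _ H] := iE I h; case/orP: H => /andP[/eqP k /andP[H1 H2]].
  - by have [_ _ _ H] := iE I h; case/orP: H => /andP[/eqP k /andP[H1 H2]].
  - move: h; rewrite mem_stop => /and5P[_ h1 h2 h3 /eqP h4]; exact: unj.
have hkD u v : has_kind P EDown u v -> y u < y v -> (EDown, v, u) \in E /\ (v < u)%N.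
  rewrite /has_kind => /inPD h hl.
  have [_ h1 _ H] := iE I h.
  have hb : y (maxn u v) < y (minn u v) by case/orP: H => /andP[/eqP k /andP[H1 H2]].
  case: (leqP u v) => uv.
    by move: hb; rewrite (minn_idPl uv) (maxn_idPr uv); lia.
  by move: h; rewrite (minn_idPr (ltnW uv)) (maxn_idPl (ltnW uv)).
split; last first.
  move=> i iN; rewrite indeg_cat indeg_stop addn0.
  have := iI I iN; have -> : (0 <= y i) = false by have := neg i iN; lia.
  have : (0 < xi x i)%N.
    case: px => /(all_nthP 0%N) H _; apply: H; case/andP: iN => ? ?; lia.
  lia.
split.
  move=> [[c a] b]; rewrite mem_cat => /orP[h|]; first by have [? ? ? _] := iE I h.
  by rewrite mem_stop => /and5P[_ ? ? ? _].
split.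
  move=> j k j1 jk kn; rewrite njoin_cat njoin_stop //.
  have : (njoin E j k <= 1)%N.
    apply: count_le1; first exact: (iUniq I).
    move=> [[c1 a1] b1] [[c2 a2] b2] e1 e2 /= /andP[/eqP ea1 /eqP eb1] /andP[/eqP ea2 /eqP eb2].
    subst; have [_ _ _ h1] := iE I e1; have [_ _ _ h2] := iE I e2.
    move: h1 h2; rewrite /bef.
    by case/orP => /and3P[/eqP-> ? ?]; case/orP => /and3P[/eqP-> ? ?] //; lia.
  by case: (njoin E j k) => [|[|]].
split.
  move=> u p hp hl; apply/eqP; apply/negP => /negP pn.
  have := path_lt (sub_path arcP hp) pn; rewrite hl; lia.
move=> a b c ab bc ac hD _; apply/negP => hS.
have hab := arcP _ _ ab; have hbc := arcP _ _ bc.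
move: hS; rewrite /has_kind => /inPS; rewrite mem_stop => /and5P[_ h1 h2 h3 /eqP h0].
have ca : (c < a)%N.
  case: (leqP a c) => // acl; move: h1 h2 h3 h0; rewrite (minn_idPl acl) (maxn_idPr acl) => h1 h2 h3 h0.
  have := unj _ _ h1 h2 h3 h0; lia.
move: h1 h2 h3 h0; rewrite (minn_idPr (ltnW ca)) (maxn_idPl (ltnW ca)) => h1 h2 h3 h0.
have caE : (EDown, c, a) \notin E by apply/negP => /njoin_pos; lia.
have cn : in_n n c by apply/andP; split; lia.
have an : in_n n a by apply/andP; split; lia.
case/or3P: hD => [/hkD /(_ hab) [e _]|/hkD /(_ hbc) [e _]|].
- move/negP: caE; apply; apply: (iK1 I e cn ca).
  by rewrite /bef negb_and; apply/orP; right; lia.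
- move/negP: caE; apply; apply: (iK2 I e an) => //.
  by rewrite /bef (neg a an) /=.
- rewrite /has_kind (minn_idPr (ltnW ca)) (maxn_idPl (ltnW ca)) => /inPD h.
  by rewrite h in caE.
Qed.

Lemma run_correct n x : parking_function x -> size x = n -> forall y E P,
  algA_run n y E P -> Inv n x y E ->
  parking_graph n P /\ (forall i, in_n n i -> indeg P i = (xi x i - 1)%N).
Proof.
move=> px sx y E P; elim => {y E P}.
- move=> y E j P jn yj jmax _ IH I; apply: IH; exact: inv_up.
- move=> y E j P nz [k0 k0n yk0] cj jmin _ IH I; apply: IH; apply: inv_down => //.
  have [j0 c0 yj0] := progress px sx I nz (ex_intro2 _ _ k0 k0n yk0).
  have := jmin j0 c0; lia.
- move=> y E neg I; exact: (final px sx I neg).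
Qed.

Lemma inv_init x : parking_function x -> Inv (size x) x (fun i => (xi x i)%:Z - 1) [::].
Proof.
move=> [px _].
have pos i : in_n (size x) i -> (0 < xi x i)%N.
  by move: px => /(all_nthP 0%N) H /andP[? ?]; apply: H; lia.
split => //.
- move=> j k jn kn jk; rewrite /bef => /andP[h _]; have := pos j jn; lia.
- move=> i k iN kN _ h; have := pos i iN; lia.
- move=> i iN; have := pos i iN => h.
  have -> : (0 <= (xi x i)%:Z - 1) by lia.
  rewrite /indeg /=; lia.
Qed.

Unset Implicit Arguments.
Local Close Scope ring_scope.

Theorem mainTheorem8 (x : seq nat) :
  parking_function x ->
  (exists P, algA x P) /\
  (forall P, algA x P ->
     parking_graph (size x) P /\
     (forall i, (1 <= i <= size x)%N -> indeg P i = (xi x i - 1)%N)).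
Proof.
move=> px; split.
  rewrite /algA; apply: (exists_run px erefl); [exact: ltnSn | exact: inv_init].
move=> P hP; exact: (run_correct px erefl hP (inv_init px)).
Qed.
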